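(* Let $X$ be an almost surely positive random variable with finite mean $\mathbb{E}(X)$ and cumulative distribution function $F$, and let $X_1, X_2$ be two independent copies of $X$. Let $g$ be a positive real-valued integrable function of two positive variables which is symmetric, i.e. $g(u,v)=g(v,u)$ for all $u,v>0$. Let $X^*$ be a random variable independent of $X$ with cumulative distribution function $F_{X^*}(u)=\frac{1}{\mathbb{E}(X)}\int_0^u t\,{\rm d}F(t)$, $u>0$. Then $$\mathbb{E}[|X_1-X_2|\,g(X_1,X_2)] = 2\mathbb{E}(X)\Big\{2\mathbb{E}\big[g(X^*,X)\mathds{1}_{\{X<X^*\}}\big]-\mathbb{E}\big[g(X^*,X)\big]+\mathbb{E}\big[g(X^*,X)\mathds{1}_{\{X=X^*\}}\big]\Big\},$$ where $\mathds{1}_A$ denotes the indicator function of the event $A$. *)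

(* Defs.v *)
From HB Require Import structures.
From mathcomp Require Import all_boot all_order all_algebra.
From mathcomp Require Import all_classical all_reals all_analysis.
Set Implicit Arguments. Unset Strict Implicit. Unset Printing Implicit Defensive.
Import Order.TTheory GRing.Theory Num.Theory.
Local Open Scope classical_set_scope.
Local Open Scope ring_scope.

Definition indep2 {d} {T : measurableType d} {R : realType}
  (P : probability T R) (Y Z : T -> R) : Prop :=
  forall A B : set R, measurable A -> measurable B ->
    P (Y @^-1` A `&` Z @^-1` B) = (P (Y @^-1` A) * P (Z @^-1` B))%E.

Definition same_law {d} {T : measurableType d} {R : realType}
  (P : probability T R) (Y Z : T -> R) : Prop :=
  forall A : set R, measurable A -> P (Y @^-1` A) = P (Z @^-1` A).

(* Main.v *)
Require Import Defs.
From HB Require Import structures.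
From mathcomp Require Import all_boot all_order all_algebra.
From mathcomp Require Import all_classical all_reals all_analysis.
Import Order.TTheory GRing.Theory Num.Theory.
Local Open Scope classical_set_scope.
Local Open Scope ring_scope.
Local Open Scope ereal_scope.
Import measurable_realfun.
From mathcomp Require Import ring lra.
Lemma measurable_boolR (R : realType) (h : bool -> R) : measurable_fun setT h.
Proof. by move=> _ Y _; exact: I. Qed.

Lemma measurable_natR d (T : measurableType d) (R : realType) (f : T -> bool) :
  measurable_fun setT f -> measurable_fun setT (fun x => ((f x)%:R : R)).
Proof.
move=> mf; apply: (@measurableT_comp _ _ _ _ _ _ (fun b : bool => (b%:R : R))) => //.
Qed.

Lemma mltR d (T : measurableType d) (R : realType) (f g : T -> R) :
  measurable_fun setT f -> measurable_fun setT g ->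
  measurable_fun setT (fun x => ((f x < g x)%R%:R : R)).
Proof.
move=> mf mg; apply: measurable_natR.
have := (@measurable_fun_ltr _ _ _ setT f g mf mg); exact.
Qed.

Lemma mleR d (T : measurableType d) (R : realType) (f g : T -> R) :
  measurable_fun setT f -> measurable_fun setT g ->
  measurable_fun setT (fun x => ((f x <= g x)%R%:R : R)).
Proof.
move=> mf mg; apply: measurable_natR.
have := (@measurable_fun_ler _ _ _ setT f g mf mg); exact.
Qed.

Lemma meqR d (T : measurableType d) (R : realType) (f g : T -> R) :
  measurable_fun setT f -> measurable_fun setT g ->
  measurable_fun setT (fun x => ((f x == g x)%R%:R : R)).
Proof.
move=> mf mg; apply: measurable_natR.
have := (@measurable_fun_eqr _ _ _ setT f g mf mg); exact.
Qed.

Lemma memNyc (R : realType) (x u : R) : (x \in `]-oo, u]%classic) = (x <= u)%R.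
Proof. by apply/idP/idP; [rewrite inE/= in_itv/= | move=> h; rewrite inE /= in_itv /=]. Qed.
Lemma memNyo (R : realType) (x u : R) : (x \in `]-oo, u[%classic) = (x < u)%R.
Proof. by apply/idP/idP; [rewrite inE/= in_itv/= | move=> h; rewrite inE /= in_itv /=]. Qed.

Section density.
Context (R : realType) (mu nu : probability R R) (c : R).
Hypothesis c0 : (0 <= c)%R.
Definition rho (x : R) : R := (c^-1 * (x * (0 < x)%R%:R))%R.
Hypothesis cdf : forall u, (0 < u)%R -> nu `]-oo, u]%classic =
  (c^-1)%:E * \int[mu]_x (x * ((0 < x) && (x <= u))%R%:R)%:E.

Lemma rho_ge0 x : (0 <= rho x)%R.
Proof.
rewrite /rho mulr_ge0 ?invr_ge0//; case: ltP => /= h; last by rewrite mulr0.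
by rewrite mulr1 ltW.
Qed.

Lemma measurable_rho : measurable_fun setT rho.
Proof.
apply: measurable_funM => //; apply: measurable_funM => //.
apply: measurable_natR; exact: measurable_fun_ltr.
Qed.

Definition mrho (A : set R) : \bar R := \int[mu]_(x in A) (rho x)%:E.

Let mrho0 : mrho set0 = 0. Proof. by rewrite /mrho integral_set0. Qed.
Let mrho_ge0 A : 0 <= mrho A.
Proof. by apply: integral_ge0 => x _; rewrite lee_fin rho_ge0. Qed.
Let mrho_sa : semi_sigma_additive mrho.
Proof.
apply: semi_sigma_additive_nng_induced.
  by apply/measurable_EFinP; exact: measurable_rho.
by move=> x; rewrite lee_fin rho_ge0.
Qed.
HB.instance Definition _ := isMeasure.Build _ _ _ mrho mrho0 mrho_ge0 mrho_sa.


Lemma mrho_ray u : (0 < u)%R -> mrho `]-oo, u]%classic = nu `]-oo, u]%classic.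
Proof.
move=> u0; rewrite cdf // /mrho integral_mkcond.
rewrite -ge0_integralZl_EFin //; last first.
- by rewrite invr_ge0.
- apply/measurable_EFinP; apply: measurable_funM => //.
  apply: measurable_natR; apply: measurable_and.
    have := (@measurable_fun_ltr _ _ _ setT (fun=> 0%R) idfun (measurable_cst _) (@measurable_id _ _ setT)); exact.
  have := (@measurable_fun_ler _ _ _ setT idfun (fun=> u) (@measurable_id _ _ setT) (measurable_cst _)); exact.
- move=> x _; rewrite lee_fin; have [x0|x0] := ltP 0%R x; rewrite /= ?mulr0 //.
  by apply: mulr_ge0; [exact: ltW|exact: ler0n].
apply: eq_integral => x _; rewrite patchE.
rewrite /rho -EFinM memNyc.
case: ifPn => xu; first by rewrite andbT.
by rewrite andbF !mulr0.
Qed.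

Lemma mrho_ray0 u : (u <= 0)%R -> mrho `]-oo, u]%classic = 0.
Proof.
move=> u0; apply: integral0_eq => x /=; rewrite in_itv /= => xu.
rewrite /rho; have -> : (0 < x)%R = false.
  by apply/negbTE; rewrite -leNgt (le_trans xu).
by rewrite mulr0 mulr0.
Qed.

Let Fn (k : nat) : set R := `]-oo, (k.+1%:R^-1)%R]%classic.

Let nu_Fn k : nu (Fn k) = mrho (Fn k).
Proof. by rewrite mrho_ray // invr_gt0 ltr0n. Qed.

Let Fn_cap : \bigcap_k Fn k = `]-oo, 0%R]%classic.
Proof.
rewrite (itvNycEbigcap false 0%R); apply: eq_bigcapr => k _.
by rewrite add0r.
Qed.

Let Fn_noninc : nonincreasing_seq Fn.
Proof.
move=> n m nm; apply/subsetPset => x; rewrite /Fn /= !in_itv /= => h.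
apply: (le_trans h); rewrite lef_pV2 ?posrE ?ltr0n // ler_nat.
by rewrite ltnS.
Qed.

Lemma nu_ray0 : nu `]-oo, 0%R]%classic = 0.
Proof.
have mFn k : measurable (Fn k) by exact: measurable_itv.
have mcap : measurable (\bigcap_k Fn k) by exact: bigcapT_measurable.
have nuF0 : nu (Fn 0) < +oo.
  by rewrite (le_lt_trans (probability_le1 _ _)) ?ltry.
have h1 : (nu \o Fn) @ \oo --> nu (\bigcap_k Fn k).
  exact: nonincreasing_cvg_mu.
have h2 : (mrho \o Fn) @ \oo --> mrho (\bigcap_k Fn k).
  apply: nonincreasing_cvg_mu => //.
  by change (mrho (Fn 0) < +oo); rewrite -nu_Fn.
have e : nu \o Fn = mrho \o Fn by apply/funext => k /=; rewrite nu_Fn.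
rewrite e in h1.
by rewrite -Fn_cap (cvg_unique (@ereal_hausdorff R) h1 h2) Fn_cap mrho_ray0.
Qed.

Lemma nu_ray u : nu `]-oo, u]%classic = mrho `]-oo, u]%classic.
Proof.
have [u0|u0] := ltP 0%R u; first by rewrite mrho_ray.
rewrite mrho_ray0 //; apply/eqP; rewrite eq_le measure_ge0 andbT -nu_ray0.
by apply: le_measure; rewrite ?inE //=; apply: subset_itvl; rewrite bnd_simp.
Qed.


Lemma nu_rayo x : nu `]-oo, x[%classic = mrho `]-oo, x[%classic.
Proof.
pose H (k : nat) : set R := `]-oo, (x - k.+1%:R^-1)%R]%classic.
have Hcup : \bigcup_k H k = `]-oo, x[%classic.
  apply/seteqP; split => y /=.
    move=> [k _]; rewrite /H /= !in_itv /= => h; apply: (le_lt_trans h).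
    by rewrite ltrBlDr ltrDl invr_gt0 ltr0n.
  rewrite in_itv /= => yx; have [k hk] := ltr_add_invr yx; exists k => //=.
  by rewrite /H /= in_itv /= lerBrDr ltW.
have mH k : measurable (H k) by exact: measurable_itv.
have mcup : measurable (\bigcup_k H k) by rewrite Hcup; exact: measurable_itv.
have ndH : nondecreasing_seq H.
  move=> n m nm; apply/subsetPset => y; rewrite /H /= !in_itv /= => h.
  apply: (le_trans h); rewrite lerD2l lerN2 lef_pV2 ?posrE ?ltr0n // ler_nat.
  by rewrite ltnS.
have h1 : (nu \o H) @ \oo --> nu (\bigcup_k H k) by exact: nondecreasing_cvg_mu.
have h2 : (mrho \o H) @ \oo --> mrho (\bigcup_k H k) by exact: nondecreasing_cvg_mu.
have e : nu \o H = mrho \o H by apply/funext => k /=; rewrite nu_ray.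
rewrite e in h1.
by rewrite -Hcup (cvg_unique (@ereal_hausdorff R) h1 h2).
Qed.

Lemma nu_mrho A : measurable A -> nu A = mrho A.
Proof.
move=> mA.
pose G := @measurable_realfun.RGenInftyO.G R.
pose g (k : nat) : set R := `]-oo, k%:R[%classic.
have mG : @measurable _ (measurableTypeR R) = <<s G >>.
  transitivity ((@ocitv R).-sigma.-measurable); first by [].
  exact: measurable_realfun.RGenInftyO.measurableE.
have setIG : setI_closed G.
  move=> _ _ [a ->] [b ->]; exists (Num.min a b).
  apply/seteqP; split => y; rewrite /= !in_itv /= lt_min.
    by move=> [-> ->].
  by move=> /andP.
have Gg k : G (g k) by exists k%:R.
have gcov : \bigcup_k g k = setT.
  apply/seteqP; split => // y _; exists (Num.Def.trunc y).+1 => //=.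
  by rewrite /g /= in_itv /= truncnS_gt.
have agree B : G B -> nu B = mrho B by move=> [a ->]; exact: nu_rayo.
have fin k : nu (g k) < +oo.
  by rewrite (le_lt_trans (probability_le1 _ _)) ?ltry //; exact: measurable_itv.
exact: (measure_unique G g mG setIG Gg gcov nu mrho agree fin A mA).
Qed.

Lemma nu_abs : nu `<< mu.
Proof.
apply/null_content_dominatesP => A mA muA0; rewrite nu_mrho // /mrho; apply: null_set_integral => //.
by apply/measurable_EFinP; apply: measurable_funTS; exact: measurable_rho.
Qed.

Lemma change_nu (h : R -> \bar R) : measurable_fun setT h -> (forall x, 0 <= h x) ->
  \int[nu]_x h x = \int[mu]_x (h x * (rho x)%:E).
Proof.
move=> mh h0.
rewrite -(Radon_Nikodym_SigmaFinite.change_of_variables nu_abs) //.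
have mf := measurable_int _ (Radon_Nikodym_SigmaFinite.f_integrable nu_abs).
have mr : measurable_fun setT (fun x => (rho x)%:E).
  by apply/measurable_EFinP; exact: measurable_rho.
apply: ae_eq_integral => //.
- exact: emeasurable_funM.
- exact: emeasurable_funM.
apply: ae_eqe_mul2l; apply: integral_ae_eq => //.
  exact: (Radon_Nikodym_SigmaFinite.f_integrable nu_abs).
by move=> E _ mE; rewrite -(Radon_Nikodym_SigmaFinite.f_integral nu_abs mE); exact: nu_mrho.
Qed.

End density.

Section joint.
Context d (T : measurableType d) (R : realType) (P : probability T R)
  (Y Z : {RV P >-> R}) (m1 m2 : probability R R).
Hypothesis h1 : forall A, measurable A -> m1 A = P (Y @^-1` A).
Hypothesis h2 : forall A, measurable A -> m2 A = P (Z @^-1` A).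
Hypothesis ind : indep2 P Y Z.

Let phi (w : T) : (R * R)%type := (Y w, Z w).
Let mphi : measurable_fun setT phi.
Proof. exact: measurable_fun_pair. Qed.
Let mphi_mixin := isMeasurableFun.Build _ _ _ _ _ mphi.
Let phi_pack : {mfun T >-> (R * R)%type} := HB.pack phi mphi_mixin.

Lemma joint_integral (F : R * R -> \bar R) : measurable_fun setT F ->
  (forall z, 0 <= F z) ->
  \int[P]_w F (Y w, Z w) = \int[m1 \x m2]_z F z.
Proof.
move=> mF F0.
transitivity (\int[distribution P phi_pack]_z F z).
  by rewrite ge0_integral_distribution.
apply: eq_measure_integral => A mA _.
apply/esym; apply: (product_measure_unique (m' := distribution P phi_pack)) => //.
move=> B C mB mC; rewrite /= h1 // h2 // -ind //.
Qed.

End joint.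

Section tonelli.
Context (R : realType).

Lemma swap_integral (m : probability R R) (F : R * R -> \bar R) :
  measurable_fun setT F -> (forall z, 0 <= F z) ->
  \int[m \x m]_z F z = \int[m \x m]_z F (z.2, z.1).
Proof.
move=> mF F0.
rewrite fubini_tonelli1 // fubini_tonelli2 //.
apply: measurableT_comp => //; exact: measurable_swap.
Qed.

Lemma density_prod (mu nu : probability R R) (r : R -> R)
  (r0 : forall x, (0 <= r x)%R) (mr : measurable_fun setT r)
  (hd : forall h : R -> \bar R, measurable_fun setT h -> (forall x, 0 <= h x) ->
     \int[nu]_x h x = \int[mu]_x (h x * (r x)%:E))
  (F : R * R -> \bar R) : measurable_fun setT F -> (forall z, 0 <= F z) ->
  \int[nu \x mu]_z F z = \int[mu \x mu]_z ((r z.1)%:E * F z).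
Proof.
move=> mF F0.
rewrite fubini_tonelli1 // fubini_tonelli1 //; last 2 first.
- apply: emeasurable_funM => //.
  apply/measurable_EFinP; apply: measurableT_comp => //.
- by move=> z; rewrite mule_ge0 // lee_fin.
rewrite hd //; last 2 first.
- exact: measurable_fun_fubini_tonelli_F.
- by move=> x; apply: integral_ge0 => y _.
apply: eq_integral => x _; rewrite /fubini_F /= ge0_integralZl //.
- by rewrite muleC.
- by apply: measurableT_comp => //; exact: pair1_measurable.
- by rewrite lee_fin.
Qed.

End tonelli.

Section aehelp.
Context d (T : measurableType d) (R : realType) (P : probability T R).

Lemma ae_of_prob (p : T -> Prop) : measurable [set w | p w] ->
  P [set w | p w] = 1 -> {ae P, forall w, p w}.
Proof.
move=> mS PS; exists (~` [set w | p w]); split => //.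
- exact: measurableC.
- by rewrite probability_setC // PS subee.
Qed.

Lemma ae_integral_eq (f g : T -> \bar R) : measurable_fun setT f ->
  measurable_fun setT g -> {ae P, forall w, f w = g w} ->
  \int[P]_w f w = \int[P]_w g w.
Proof.
move=> mf mg h; apply: ae_eq_integral => //.
by apply: filterS h => w ->.
Qed.

Lemma measurable_pos (f : T -> R) : measurable_fun setT f ->
  measurable [set w | (0 < f w)%R].
Proof.
move=> mf.
have h := (@measurable_fun_ltr _ _ _ setT (fun=> 0%R) f (measurable_cst _) mf) measurableT [set true] I.
rewrite setTI in h.
suff -> : [set w | (0 < f w)%R] = (fun w => (0 < f w)%R) @^-1` [set true] by [].
by apply/seteqP; split => w /=.
Qed.

End aehelp.

Section inthelp.
Context d (T : measurableType d) (R : realType) (m : {measure set T -> \bar R}).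

Lemma int3 (f g h : T -> \bar R) (k : R) : measurable_fun setT f ->
  measurable_fun setT g -> measurable_fun setT h ->
  (forall x, 0 <= f x) -> (forall x, 0 <= g x) -> (forall x, 0 <= h x) ->
  (0 <= k)%R ->
  \int[m]_x (f x + k%:E * g x + k%:E * h x) =
  \int[m]_x f x + k%:E * \int[m]_x g x + k%:E * \int[m]_x h x.
Proof.
move=> mf mg mh f0 g0 h0 k0.
have mkg : measurable_fun setT (fun x => k%:E * g x) by exact: emeasurable_funM.
have mkh : measurable_fun setT (fun x => k%:E * h x) by exact: emeasurable_funM.
have kg0 x : 0 <= k%:E * g x by rewrite mule_ge0 // lee_fin.
have kh0 x : 0 <= k%:E * h x by rewrite mule_ge0 // lee_fin.
rewrite (ge0_integralD _ measurableT (fun x _ => adde_ge0 (f0 x) (kg0 x))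
  (emeasurable_funD mf mkg) (fun x _ => kh0 x) mkh).
rewrite (ge0_integralD _ measurableT (fun x _ => f0 x) mf (fun x _ => kg0 x) mkg).
rewrite (ge0_integralZl_EFin _ measurableT (fun x _ => g0 x) mg k0).
by rewrite (ge0_integralZl_EFin _ measurableT (fun x _ => h0 x) mh k0).
Qed.

Lemma int2 (g h : T -> \bar R) (k : R) :
  measurable_fun setT g -> measurable_fun setT h ->
  (forall x, 0 <= g x) -> (forall x, 0 <= h x) -> (0 <= k)%R ->
  \int[m]_x (k%:E * g x + k%:E * h x) =
  k%:E * \int[m]_x g x + k%:E * \int[m]_x h x.
Proof.
move=> mg mh g0 h0 k0.
have mkg : measurable_fun setT (fun x => k%:E * g x) by exact: emeasurable_funM.
have mkh : measurable_fun setT (fun x => k%:E * h x) by exact: emeasurable_funM.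
have kg0 x : 0 <= k%:E * g x by rewrite mule_ge0 // lee_fin.
have kh0 x : 0 <= k%:E * h x by rewrite mule_ge0 // lee_fin.
rewrite (ge0_integralD _ measurableT (fun x _ => kg0 x) mkg (fun x _ => kh0 x) mkh).
rewrite (ge0_integralZl_EFin _ measurableT (fun x _ => g0 x) mg k0).
by rewrite (ge0_integralZl_EFin _ measurableT (fun x _ => h0 x) mh k0).
Qed.

End inthelp.

Theorem proposition1 (R : realType) (d : measure_display) (T : measurableType d)
  (P : probability T R) (X X1 X2 Xs : {RV P >-> R}) (g : R -> R -> R)
  (* X is almost surely positive with finite mean *)
  (HXpos : P [set w | (0 < X w)%R] = 1)
  (HXint : P.-integrable setT (EFin \o X))
  (* X1, X2 are independent copies of X *)
  (HX1 : same_law P X1 X) (HX2 : same_law P X2 X) (HX12 : indep2 P X1 X2)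
  (* g : positive, symmetric, measurable, integrable *)
  (Hgmeas : measurable_fun setT (fun p : R * R => g p.1 p.2))
  (Hgpos : forall u v : R, (0 < u)%R -> (0 < v)%R -> (0 < g u v)%R)
  (Hgsym : forall u v : R, (0 < u)%R -> (0 < v)%R -> g u v = g v u)
  (Hgint : P.-integrable setT (fun w => (g (Xs w) (X w))%:E))
  (* X* is independent of X, with cdf u |-> (1/E X) int_0^u t dF(t), u > 0 *)
  (HXsind : indep2 P Xs X)
  (HXscdf : forall u : R, (0 < u)%R ->
     P (Xs @^-1` `]-oo, u]) =
       ((fine 'E_P[X])^-1)%:E *
       'E_P[fun w => (X w * ((0 < X w) && (X w <= u))%:R)%R]) :
  'E_P[fun w => (`|(X1 w - X2 w)| * g (X1 w) (X2 w))%R] =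
  (2 * fine 'E_P[X])%R%:E *
   (2 * 'E_P[fun w => (g (Xs w) (X w) * (X w < Xs w)%R%:R)%R]
    - 'E_P[fun w => g (Xs w) (X w)]
    + 'E_P[fun w => (g (Xs w) (X w) * (X w == Xs w)%R%:R)%R])%E.
Proof.
set c := fine 'E_P[X].
pose mu := distribution P X.
pose nu := distribution P Xs.
have mX := measurable_funPT X.
have mX1 := measurable_funPT X1.
have mX2 := measurable_funPT X2.
have mXs := measurable_funPT Xs.
have EXfin : 'E_P[X] \is a fin_num.
  by rewrite expectation_def; exact: (integrable_fin_num measurableT HXint).
have EXE : 'E_P[X] = c%:E by rewrite fineK.
have aeX : {ae P, forall w, (0 < X w)%R}.
  by apply: ae_of_prob => //; exact: measurable_pos.
have pos_law (Y : {RV P >-> R}) : same_law P Y X -> {ae P, forall w, (0 < Y w)%R}.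
  move=> hY; apply: ae_of_prob; first exact/measurable_pos/measurable_funPT.
  have e (Z : T -> R) : [set w | (0 < Z w)%R] = Z @^-1` `]0%R, +oo[%classic.
    by apply/seteqP; split => w /=; rewrite in_itv /= andbT.
  rewrite (e Y) (hY _ (measurable_itv _)) -(e X); exact: HXpos.
have aeX1 := pos_law X1 HX1.
have aeX2 := pos_law X2 HX2.
have mXpos : measurable_fun setT (fun w => (0 < X w)%R).
  have := (@measurable_fun_ltr _ _ _ setT (fun=> 0%R) X (measurable_cst _) mX); exact.
have c0 : (0 <= c)%R.
  rewrite -lee_fin -EXE expectation.unlock.
  have -> : \int[P]_w (X w)%:E = \int[P]_w (X w * (0 < X w)%R%:R)%:E.
    apply: ae_integral_eq.
    - by apply/measurable_EFinP.
    - apply/measurable_EFinP; apply: measurable_funM => //; exact: measurable_natR.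
    - by apply: filterS aeX => w h; rewrite h mulr1.
  apply: integral_ge0 => w _; rewrite lee_fin.
  by case: ltP => h; rewrite ?mulr1 ?mulr0 // ltW.
have hcdf : forall u, (0 < u)%R -> nu `]-oo, u]%classic =
    (c^-1)%:E * \int[mu]_x (x * ((0 < x) && (x <= u))%R%:R)%:E.
  move=> u u0; rewrite /nu /distribution /pushforward HXscdf // -/c.
  congr (_ * _); rewrite expectation.unlock (ge0_integral_distribution X) //.
  - apply/measurable_EFinP; apply: measurable_funM => //.
    apply: measurable_natR; apply: measurable_and.
      have := (@measurable_fun_ltr _ _ _ setT (fun=> 0%R) idfun (measurable_cst _) (@measurable_id _ _ setT)); exact.
    have := (@measurable_fun_ler _ _ _ setT idfun (fun=> u) (@measurable_id _ _ setT) (measurable_cst _)); exact.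
  - move=> x; rewrite lee_fin; have [x0|x0] := ltP 0%R x; rewrite /= ?mulr0 //.
    by apply: mulr_ge0; [exact: ltW|exact: ler0n].
have hd := @change_nu _ _ _ _ c0 hcdf.
have aeXs : {ae P, forall w, (0 < Xs w)%R}.
  exists (Xs @^-1` `]-oo, 0%R]%classic); split.
  - by rewrite -[X in measurable X]setTI; apply: mXs => //; exact: measurable_itv.
  - exact: (@nu_ray0 _ _ _ _ c0 hcdf).
  - by move=> w /= /negP; rewrite -leNgt in_itv.
have cneq0 : c != 0%R.
  apply/negP => /eqP c00.
  have := @probability_setT _ _ _ nu.
  rewrite (@nu_mrho _ _ _ _ c0 hcdf setT measurableT) /mrho integral0_eq.
    by move=> /(congr1 fine) /= /eqP; rewrite eq_sym oner_eq0.
  by move=> x _; rewrite /rho c00 invr0 mul0r.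
pose Gp (z : R * R) : R := (g z.1 z.2 * ((0 < z.1) && (0 < z.2))%R%:R)%R.
have mGp : measurable_fun setT Gp.
  apply: measurable_funM => //; apply: measurable_natR; apply: measurable_and.
    have := (@measurable_fun_ltr _ _ _ setT (fun=> 0%R) fst (measurable_cst _) measurable_fst); exact.
  have := (@measurable_fun_ltr _ _ _ setT (fun=> 0%R) snd (measurable_cst _) measurable_snd); exact.
have Gp0 z : (0 <= Gp z)%R.
  rewrite /Gp; case: (ltP 0%R z.1) => h1; case: (ltP 0%R z.2) => h2 /=;
    rewrite ?mulr0 ?mulr1 //.
  exact/ltW/Hgpos.
have Gpsym z : Gp (z.2, z.1) = Gp z.
  rewrite /Gp /=; case: (ltP 0%R z.1) => h1; case: (ltP 0%R z.2) => h2 /=;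
    rewrite ?mulr0 ?mulr1 //.
  exact: Hgsym.
have keyXs (e : T -> R) (k : R * R -> R) : measurable_fun setT e ->
    measurable_fun setT k -> (forall z, 0 <= k z)%R ->
    (forall w, 0 < Xs w -> 0 < X w -> e w = k (Xs w, X w))%R ->
    'E_P[e] = \int[mu \x mu]_z ((rho R c z.1) * k z)%:E.
  move=> me mk k0 ek; rewrite expectation.unlock.
  have -> : \int[P]_w (e w)%:E = \int[P]_w (k (Xs w, X w))%:E.
    apply: ae_integral_eq.
    - by apply/measurable_EFinP.
    - apply/measurable_EFinP; apply: measurableT_comp mk _.
      exact: measurable_fun_pair.
    - by apply: (filterS2 _ _ aeXs aeX) => w h1 h2; rewrite ek.
  have mkE : measurable_fun setT (fun z => (k z)%:E) by apply/measurable_EFinP.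
  have k0E : forall z, 0 <= (k z)%:E by move=> z; rewrite lee_fin.
  rewrite (@joint_integral _ _ _ P Xs X nu mu (fun _ _ => erefl) (fun _ _ => erefl) HXsind (fun z => (k z)%:E) mkE k0E).
  rewrite (@density_prod R mu nu (rho R c) (@rho_ge0 R c c0) (@measurable_rho R c) hd (fun z => (k z)%:E) mkE k0E).
  by apply: eq_integral => z _; rewrite EFinM.
have keyX12 (e : T -> R) (k : R * R -> R) : measurable_fun setT e ->
    measurable_fun setT k -> (forall z, 0 <= k z)%R ->
    (forall w, 0 < X1 w -> 0 < X2 w -> e w = k (X1 w, X2 w))%R ->
    'E_P[e] = \int[mu \x mu]_z (k z)%:E.
  move=> me mk k0 ek; rewrite expectation.unlock.
  have -> : \int[P]_w (e w)%:E = \int[P]_w (k (X1 w, X2 w))%:E.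
    apply: ae_integral_eq.
    - by apply/measurable_EFinP.
    - apply/measurable_EFinP; apply: measurableT_comp mk _.
      exact: measurable_fun_pair.
    - by apply: (filterS2 _ _ aeX1 aeX2) => w h1 h2; rewrite ek.
  have mkE : measurable_fun setT (fun z => (k z)%:E) by apply/measurable_EFinP.
  have k0E : forall z, 0 <= (k z)%:E by move=> z; rewrite lee_fin.
  apply: (@joint_integral _ _ _ P X1 X2 mu mu _ _ HX12 (fun z => (k z)%:E) mkE k0E).
  - by move=> A mA; rewrite /mu /distribution /pushforward HX1.
  - by move=> A mA; rewrite /mu /distribution /pushforward HX2.
have mgXs : measurable_fun setT (fun w => g (Xs w) (X w)).
  have := measurableT_comp Hgmeas (measurable_fun_pair mXs mX); exact.
have mgX12 : measurable_fun setT (fun w => g (X1 w) (X2 w)).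
  have := measurableT_comp Hgmeas (measurable_fun_pair mX1 mX2); exact.
have m1 : measurable_fun setT (@fst R R) := measurable_fst.
have m2 : measurable_fun setT (@snd R R) := measurable_snd.
pose r := rho R c.
pose t1 z := (r z.1 * (Gp z * (z.2 < z.1)%R%:R))%R.
pose t2 z := (r z.1 * (Gp z * (z.1 < z.2)%R%:R))%R.
pose t3 z := (r z.1 * (Gp z * (z.2 == z.1)%:R))%R.
pose t0 z := (r z.1 * Gp z)%R.
pose fL (z : R * R) := (`|z.1 - z.2| * Gp z)%R.
have hE1 : 'E_P[fun w => (g (Xs w) (X w) * (X w < Xs w)%R%:R)%R] =
    \int[mu \x mu]_z (t1 z)%:E.
  apply: keyXs.
  - by apply: measurable_funM => //; exact: mltR.
  - by apply: measurable_funM => //; exact: mltR.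
  - by move=> z; rewrite mulr_ge0.
  - by move=> w h1 h2; rewrite /Gp /= h1 h2 mulr1.
have hE2 : 'E_P[fun w => g (Xs w) (X w)] = \int[mu \x mu]_z (t0 z)%:E.
  apply: keyXs => //.
  by move=> w h1 h2; rewrite /Gp /= h1 h2 mulr1.
have hE3 : 'E_P[fun w => (g (Xs w) (X w) * (X w == Xs w)%:R)%R] =
    \int[mu \x mu]_z (t3 z)%:E.
  apply: keyXs.
  - by apply: measurable_funM => //; exact: meqR.
  - by apply: measurable_funM => //; exact: meqR.
  - by move=> z; rewrite mulr_ge0.
  - by move=> w h1 h2; rewrite /Gp /= h1 h2 mulr1.
have hL : 'E_P[fun w => (`|X1 w - X2 w| * g (X1 w) (X2 w))%R] =
    \int[mu \x mu]_z (fL z)%:E.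
  apply: keyX12.
  - apply: measurable_funM => //.
    have := measurableT_comp (@normr_measurable R setT) (measurable_funB mX1 mX2); exact.
  - apply: measurable_funM => //.
    have := measurableT_comp (@normr_measurable R setT) (measurable_funB m1 m2); exact.
  - by move=> z; rewrite mulr_ge0.
  - by move=> w h1 h2; rewrite /fL /Gp /= h1 h2 mulr1.
rewrite hL hE1 hE2 hE3.
have r0 x : (0 <= r x)%R by exact: rho_ge0.
have mr : measurable_fun setT r by exact: measurable_rho.
have mr1 : measurable_fun setT (fun z : R * R => r z.1).
  have := measurableT_comp mr m1; exact.
have mt1 : measurable_fun setT (fun z => (t1 z)%:E).
  apply/measurable_EFinP; apply: measurable_funM => //.
  by apply: measurable_funM => //; exact: mltR.
have mt2 : measurable_fun setT (fun z => (t2 z)%:E).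
  apply/measurable_EFinP; apply: measurable_funM => //.
  by apply: measurable_funM => //; exact: mltR.
have mt3 : measurable_fun setT (fun z => (t3 z)%:E).
  apply/measurable_EFinP; apply: measurable_funM => //.
  by apply: measurable_funM => //; exact: meqR.
have mt0 : measurable_fun setT (fun z => (t0 z)%:E).
  by apply/measurable_EFinP; apply: measurable_funM.
have mfL : measurable_fun setT (fun z => (fL z)%:E).
  apply/measurable_EFinP; apply: measurable_funM => //.
  have := measurableT_comp (@normr_measurable R setT) (measurable_funB m1 m2); exact.
have t10 z : 0 <= (t1 z)%:E.
  by rewrite lee_fin; apply: mulr_ge0; [exact: r0|apply: mulr_ge0; [exact: Gp0|exact: ler0n]].
have t20 z : 0 <= (t2 z)%:E.
  by rewrite lee_fin; apply: mulr_ge0; [exact: r0|apply: mulr_ge0; [exact: Gp0|exact: ler0n]].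
have t30 z : 0 <= (t3 z)%:E.
  by rewrite lee_fin; apply: mulr_ge0; [exact: r0|apply: mulr_ge0; [exact: Gp0|exact: ler0n]].
have t00 z : 0 <= (t0 z)%:E.
  by rewrite lee_fin; apply: mulr_ge0; [exact: r0|exact: Gp0].
have fL0 z : 0 <= (fL z)%:E.
  by rewrite lee_fin; apply: mulr_ge0; [exact: normr_ge0|exact: Gp0].
have I1 : \int[mu \x mu]_z (t0 z)%:E = \int[mu \x mu]_z (t1 z)%:E +
    \int[mu \x mu]_z (t2 z)%:E + \int[mu \x mu]_z (t3 z)%:E.
  rewrite -(ge0_integralD _ measurableT (fun z _ => t10 z) mt1 (fun z _ => t20 z) mt2).
  rewrite -(ge0_integralD _ measurableT (fun z _ => adde_ge0 (t10 z) (t20 z))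
    (emeasurable_funD mt1 mt2) (fun z _ => t30 z) mt3).
  apply: eq_integral => z _; rewrite -!EFinD /t0 /t1 /t2 /t3 -!mulrDr.
  have -> : ((z.2 < z.1)%R%:R + (z.1 < z.2)%R%:R + (z.2 == z.1)%:R = 1 :> R)%R.
    by case: ltgtP => _ /=; rewrite ?add0r ?addr0.
  by rewrite mulr1.
have cr u : (c * r u = u * (0 < u)%R%:R)%R by rewrite /r /rho mulrA divff // mul1r.
have pt z : (fL z + c * t2 (z.2, z.1) + c * t2 z = c * t1 z + c * t1 (z.2, z.1))%R.
  case: z => x y; rewrite /fL /t1 /t2 /= [Gp (y, x)](Gpsym (x, y)) /= /r /rho !mulrA (mulfV cneq0) !mul1r.
  rewrite /Gp /=; case: (ltP 0%R x) => hx; case: (ltP 0%R y) => hy /=;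
    rewrite ?mulr0n ?mulr0 ?mul0r ?addr0 ?add0r //.
  rewrite ?mulr1n ?mulr1.
  case: (ltgtP x y) => hxy /=; rewrite ?mulr0n ?mulr1n ?mulr0 ?mulr1 ?addr0 ?add0r.
  - by rewrite ltr0_norm ?subr_lt0 //; ring.
  - by rewrite gtr0_norm ?subr_gt0 //; ring.
  - by rewrite hxy subrr normr0 mul0r.
have sw1 : \int[mu \x mu]_z (t1 z)%:E = \int[mu \x mu]_z (t1 (z.2, z.1))%:E.
  exact: (@swap_integral R mu (fun z => (t1 z)%:E) mt1 t10).
have sw2 : \int[mu \x mu]_z (t2 z)%:E = \int[mu \x mu]_z (t2 (z.2, z.1))%:E.
  exact: (@swap_integral R mu (fun z => (t2 z)%:E) mt2 t20).
have mt1s : measurable_fun setT (fun z : R * R => (t1 (z.2, z.1))%:E).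
  have := measurableT_comp mt1 (@measurable_swap _ _ R R); exact.
have mt2s : measurable_fun setT (fun z : R * R => (t2 (z.2, z.1))%:E).
  have := measurableT_comp mt2 (@measurable_swap _ _ R R); exact.
have I2 : \int[mu \x mu]_z (fL z)%:E + c%:E * \int[mu \x mu]_z (t2 z)%:E +
    c%:E * \int[mu \x mu]_z (t2 z)%:E =
    c%:E * \int[mu \x mu]_z (t1 z)%:E + c%:E * \int[mu \x mu]_z (t1 z)%:E.
  rewrite {1}sw2 -(@int3 _ _ _ _ _ _ _ _ mfL mt2s mt2 fL0 (fun z => t20 (z.2, z.1)) t20 c0).
  rewrite {2}sw1 -(@int2 _ _ _ _ _ _ _ mt1 mt1s t10 (fun z => t10 (z.2, z.1)) c0).
  by apply: eq_integral => z _; rewrite -!EFinM -!EFinD pt.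
have F0 : \int[mu \x mu]_z (t0 z)%:E \is a fin_num.
  rewrite ge0_fin_numE; last exact: integral_ge0.
  rewrite -hE2 expectation.unlock; apply: (le_lt_trans (lee_abs _)).
  apply: (le_lt_trans (le_abse_integral _ measurableT _)).
    exact/measurable_EFinP.
  by case/integrableP: Hgint.
have := F0; rewrite I1 fin_numD => /andP[]; rewrite fin_numD => /andP[F1 F2] F3.
have FL : \int[mu \x mu]_z (fL z)%:E \is a fin_num.
  have : (c%:E * \int[mu \x mu]_z (t1 z)%:E + c%:E * \int[mu \x mu]_z (t1 z)%:E)
      \is a fin_num.
    by have Fc := fin_numM (isT : c%:E \is a fin_num) F1; rewrite fin_numD Fc.
  by rewrite -I2 fin_numD => /andP[]; rewrite fin_numD => /andP[].
move: I1 I2.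
rewrite -(fineK F0) -(fineK F1) -(fineK F2) -(fineK F3) -(fineK FL).
set a := fine _; set b := fine _; set e := fine _; set t := fine _; set l := fine _.
rewrite -!EFinM -!EFinD => -[h1] -[h2].
congr EFin.
have -> : l = (c * b + c * b - c * e - c * e)%R by rewrite -h2; ring.
ring.
Qed.
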